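(* Let $H$ be an equibipartite tree on $2l$ vertices. If $H$ does not contain a perfect matching, then there exists a partition of $V(H)$ into two classes of different sizes such that the larger class induces no edges and the smaller class induces exactly one edge.
   Context: A tree is equibipartite if its two bipartition classes have the same size. *)

(* Defs.v *)
From mathcomp Require Import all_boot.
Set Implicit Arguments. Unset Strict Implicit. Unset Printing Implicit Defensive.

Section Graphs.
Variable T : finType.

Definition simple_graph (e : rel T) : Prop := symmetric e /\ irreflexive e.

Definition is_edge (e : rel T) (E : {set T}) : bool :=
  [exists x, exists y, e x y && (E == [set x; y])].

Definition induced_edges (e : rel T) (S : {set T}) : {set {set T}} :=
  [set E : {set T} | is_edge e E & E \subset S].

Definition connected (e : rel T) : Prop := forall x y : T, connect e x y.

Definition acyclic (e : rel T) : Prop :=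
  forall c : seq T, uniq c -> 3 <= size c -> ~~ cycle e c.

Definition is_tree (e : rel T) : Prop :=
  [/\ simple_graph e, 0 < #|T|, connected e & acyclic e].

Definition independent (e : rel T) (S : {set T}) : Prop :=
  forall x y, x \in S -> y \in S -> ~~ e x y.

Definition equibipartite (e : rel T) : Prop :=
  exists A : {set T}, [/\ independent e A, independent e (~: A) & #|A| = #|~: A|].

Definition perfect_matching (e : rel T) (M : {set {set T}}) : Prop :=
  [/\ forall E, E \in M -> is_edge e E, trivIset M & cover M = [set: T]].

Definition has_perfect_matching (e : rel T) : Prop :=
  exists M, perfect_matching e M.

End Graphs.

(* Main.v *)
Require Import Defs.
From mathcomp Require Import all_boot all_order all_algebra zify.
Set Implicit Arguments. Unset Strict Implicit. Unset Printing Implicit Defensive.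

Section Tree.
Variable T : finType.
Variable e : rel T.
Hypothesis esym : symmetric e.
Hypothesis eirr : irreflexive e.
Hypothesis econn : connected e.
Hypothesis eacyc : acyclic e.

Definition bad (u v x y : T) := ((x == u) && (y == v)) || ((x == v) && (y == u)).
Definition ee u v : rel T := [rel x y | e x y && ~~ bad u v x y].
Arguments ee u v /.
Definition side u v : {set T} := [set x | connect (ee u v) u x].

Lemma ee_sym u v : symmetric (ee u v).
Proof. move=> x y; rewrite /ee /= esym /bad orbC (andbC (y==u)) (andbC (y==v)) //. Qed.

Lemma ee_swap u v : ee u v =2 ee v u.
Proof. move=> x y; rewrite /ee /= /bad orbC //. Qed.

Lemma uniq_connect (r : rel T) x y : connect r x y ->
  exists p, [/\ path r x p, uniq (x :: p) & last x p = y].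
Proof.
move/connectP=> [p pp ->]. case: (shortenP pp) => p' pp' up' _.
by exists p'.
Qed.

Lemma side_cross u v x y : e x y -> x \in side u v -> y \notin side u v -> bad u v x y.
Proof.
move=> exy; rewrite !inE => hx; apply: contraNT => nb.
by apply: connect_trans hx (connect1 _); rewrite /ee /= exy nb.
Qed.

Lemma path_ee u v x p : path e x p -> u \notin p -> v \notin p -> path (ee u v) x p.
Proof.
elim: p x => [//|y p IH] x /= /andP[exy pp]; rewrite !inE => /norP[uy up] /norP[vy vp].
rewrite exy IH // andbT /bad (eq_sym y v) (negbTE vy) (eq_sym y u) (negbTE uy) !andbF //.
Qed.

Lemma side_cover u v x : e u v -> x \notin side u v -> x \in side v u.
Proof.
move=> euv nx. have [p [pp up lp]] := uniq_connect (econn v x).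
rewrite inE. case uin: (u \in p).
- case/splitPr: uin up pp lp => p1 p2 up pp lp.
  move: pp; rewrite cat_path /= => /and3P[_ _ pp2].
  move: lp; rewrite last_cat /= => lp.
  have up2 : u \notin p2.
    by move: up; rewrite -cat_cons cat_uniq => /and3P[_ _ /andP[]].
  have vp2 : v \notin p2.
    apply/negP => vp2; move: up; rewrite -cat_cons cat_uniq => /and3P[_ /hasPn H _].
    by move: (H v); rewrite !inE vp2 eqxx orbT /= => /(_ isT).
  case/negP: nx; rewrite inE -lp; apply/connectP; exists p2 => //.
  exact: path_ee.
- move: up => /= /andP[vp _].
  apply/connectP; exists p => //. by apply: path_ee => //; rewrite uin.
Qed.

Lemma side_disj u v x : e u v -> x \in side u v -> x \notin side v u.
Proof.
move=> euv hu; apply/negP => hv.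
have cuv : connect (ee u v) u v.
  rewrite inE in hu; rewrite inE (eq_connect (ee_swap v u)) in hv.
  apply: connect_trans hu _; by rewrite (sym_connect_sym (@ee_sym u v)).
have [p [pp up lp]] := uniq_connect cuv.
have pe : path e u p by apply: sub_path pp => a b /andP[].
have uv : u != v by apply/negP => /eqP huv; rewrite huv eirr in euv.
have : 3 <= size (u :: p).
  case: p pp up lp pe => [|y [|z p]] //= pp up lp pe.
  - by rewrite lp eqxx in uv.
  - by move: pp; rewrite lp /= /bad !eqxx /= andbF.
move=> /(eacyc up); apply/negP. rewrite /= rcons_path pe lp esym /= negbK //.
Qed.

Lemma not_self a b : e a b -> a \notin side b a.
Proof. move=> eab; apply: side_disj eab _; by rewrite inE connect0. Qed.

Lemma side_nest a b b' : e a b -> e a b' -> b != b' -> side b' a \subset side a b.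
Proof.
move=> eab eab' bb'; apply/subsetP => y; rewrite inE => /connectP [p pp ->].
have na : forall z, z \in b' :: p -> z != a.
  move=> z /(path_connect pp) cz; apply/negP => /eqP za.
  move: cz; rewrite za => cz; have := not_self eab'; by rewrite inE cz.
have ab : a != b by apply/negP => /eqP h; rewrite h eirr in eab.
have pp' : path (ee a b) b' p.
  apply: (sub_in_path (P := predC1 a)) pp.
  - move=> z w; rewrite !inE => za wa /andP[ezw _].
    by rewrite /= ezw /bad (negbTE za) (negbTE wa) andbF.
  - by apply/allP => z /na.
rewrite inE; apply: (connect_trans (y := b')); last by apply/connectP; exists p.
apply: connect1; by rewrite /= eab' /bad eqxx (negbTE ab) /= ?andbF ?orbF eq_sym.
Qed.

Lemma side_split a z : z != a -> exists2 b, e a b & z \in side b a.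
Proof.
move=> za; have [p [pp up lp]] := uniq_connect (econn a z).
case: p pp up lp => [|y p] /=; first by move=> _ _ h; rewrite h eqxx in za.
case/andP => eay pp /andP[ay up] lp.
exists y => //. rewrite inE -lp; apply/connectP; exists p => //.
apply: (sub_in_path (P := predC1 a)) pp.
- move=> s t; rewrite !inE => sa ta est.
  by rewrite /= est /bad (negbTE sa) (negbTE ta) /= !andbF.
- apply/allP => t ti /=; apply: (contraNneq _ ay) => ta; by rewrite -ta.
Qed.

Lemma side_uniq a b b' z : e a b -> e a b' -> z \in side b a -> z \in side b' a -> b = b'.
Proof.
move=> eab eab' zb zb'; apply/eqP/negP => /negP bb'.
have := subsetP (side_nest eab eab' bb') z zb'.
move=> /(side_disj eab); by rewrite zb.
Qed.

Lemma side_compl u v : e u v -> side v u = ~: side u v.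
Proof.
move=> euv; apply/setP => z; rewrite in_setC.
case: (boolP (z \in side u v)) => h.
- exact: negbTE (side_disj euv h).
- exact: side_cover euv h.
Qed.


Variable A : {set T}.
Hypothesis indA : independent e A.
Hypothesis indB : independent e (~: A).
Hypothesis cardAB : #|A| = #|~: A|.

Import GRing.Theory Num.Theory.
Local Open Scope ring_scope.

Definition w (x : T) : int := if x \in A then 1 else -1.
Definition d (S : {set T}) : int := \sum_(x in S) w x.

Lemma d_card S : d S = (#|A :&: S|%:Z - #|~: A :&: S|%:Z).
Proof.
rewrite /d (bigID (mem A)) /=.
rewrite (eq_bigl (fun x => x \in A :&: S)); last by move=> x; rewrite !inE andbC.
rewrite [X in _ + X](eq_bigl (fun x => x \in ~: A :&: S)); last by move=> x; rewrite !inE andbC.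
rewrite (eq_bigr (fun _ => 1)); last by move=> x; rewrite inE /w => /andP[->].
rewrite [X in _ + X](eq_bigr (fun _ => -1)); last by move=> x; rewrite !inE /w => /andP[/negbTE ->].
by rewrite !sumr_const mulNrn !natz.
Qed.

Lemma dT : \sum_x w x = 0.
Proof.
have := d_card setT; rewrite !setIT cardAB subrr => H; apply: etrans H.
by rewrite /d; apply: eq_bigl => x; rewrite inE.
Qed.

Lemma d_compl S : d S + d (~: S) = 0.
Proof.
rewrite -dT (bigID (mem S)) /=; congr (_ + _); apply: eq_bigl => x; by rewrite ?inE.
Qed.

Lemma decomp (f : T -> int) x :
  \sum_(z | z != x) f z = \sum_(y | e x y) \sum_(z in side y x) f z.
Proof.
transitivity (\sum_z \sum_(y | e x y) (if z \in side y x then f z else 0)).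
  rewrite big_mkcond /=; apply: eq_bigr => z _.
  case: eqP => [->|/eqP zx].
  - rewrite big1 // => y exy; by rewrite (negbTE (not_self exy)).
  - have [y0 exy0 zy0] := side_split zx.
    rewrite (bigD1 y0) //= zy0 big1 ?addr0 // => y /andP[exy yy0].
    case: ifP => // zy. by rewrite (side_uniq exy exy0 zy zy0) eqxx in yy0.
rewrite exchange_big /=; apply: eq_bigr => y _; by rewrite -big_mkcond.
Qed.

Lemma side_d u v : e u v -> d (side v u) = - d (side u v).
Proof. move=> euv; rewrite (side_compl euv); apply/eqP; rewrite -addr_eq0 addrC d_compl //. Qed.

Lemma sum_nbr x : \sum_(y | e x y) d (side x y) = w x.
Proof.
have H2 := decomp w x.
have H3 : \sum_(y | e x y) d (side x y) = - \sum_(y | e x y) d (side y x).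
  by rewrite -sumrN; apply: eq_bigr => y h; rewrite (side_d h) opprK.
have := dT; rewrite (bigD1 x) //= => H1.
rewrite H3 -H2; move: H1; set s := \sum_(z | z != x) w z; lia.
Qed.

Definition q x y := w x * d (side x y).

Lemma w_edge x y : e x y -> w y = - w x.
Proof.
move=> exy; rewrite /w; case xA: (x \in A); case yA: (y \in A) => //.
- by have := indA xA yA; rewrite exy.
- have := indB (x := x) (y := y); rewrite !in_setC xA yA exy => /(_ isT isT) //.
Qed.

Lemma q_sym x y : e x y -> q y x = q x y.
Proof. move=> exy; rewrite /q (w_edge exy) (side_d exy) mulrNN //. Qed.

Lemma sum_q x : \sum_(y | e x y) q x y = 1.
Proof. rewrite -mulr_sumr sum_nbr /w; case: ifP => _; by rewrite ?mulrNN mulr1. Qed.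

Lemma sum1 (P : pred T) (F : T -> int) : (forall i, P i -> 0 <= F i) ->
  \sum_(i | P i) F i = 1 -> exists i, [/\ P i, F i = 1 & forall j, P j -> F j = 1 -> j = i].
Proof.
move=> F0 S1. have [i /andP[Pi Fi]] : exists i, P i && (0 < F i) by apply: psumr_neq0P F0 _; rewrite S1.
have H := S1; rewrite (bigD1 i) //= in H.
have R0 : 0 <= \sum_(j | P j && (j != i)) F j.
  by apply: sumr_ge0 => j /andP[Pj _]; exact: F0.
have Fi1 : F i = 1 by move: H R0 Fi; set r := \sum_(j | _) _; lia.
have R1 : \sum_(j | P j && (j != i)) F j = 0 by move: H; rewrite Fi1; set r := \sum_(j | _) _; lia.
exists i; split => // j Pj Fj; apply/eqP; apply: contraT => ji.
have := psumr_eq0P (P := fun j => P j && (j != i)) (fun j h => F0 j (proj1 (andP h))) R1 (i := j).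
by rewrite Pj ji Fj => /(_ isT).
Qed.

Section NoBad.
Hypothesis nobad : forall u v, e u v -> u \in A -> 0 <= d (side u v).

Lemma q_ge0 x y : e x y -> 0 <= q x y.
Proof.
move=> exy; case xA: (x \in A).
- by rewrite /q /w xA mul1r; apply: nobad.
- have yA : y \in A.
    apply: contraT => yA; have := indB (x := x) (y := y).
    by rewrite !in_setC xA yA exy => /(_ isT isT).
  rewrite -q_sym // /q /w yA mul1r; apply: nobad => //; by rewrite esym.
Qed.

Lemma partner x : exists y, [/\ e x y, q x y = 1 & forall y', e x y' -> q x y' = 1 -> y' = y].
Proof. exact: sum1 (@q_ge0 x) (sum_q x). Qed.

Definition M : {set {set T}} :=
  [set E | [exists x, exists y, [&& e x y, q x y == 1 & E == [set x; y]]]].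

Lemma inM E z : E \in M -> z \in E -> exists y, [/\ e z y, q z y = 1 & E = [set z; y]].
Proof.
rewrite inE => /existsP[x /existsP[y /and3P[exy /eqP qxy /eqP ->]]].
rewrite !inE => /orP[] /eqP ->.
- by exists y.
- exists x; rewrite esym q_sym // setUC //.
Qed.

Lemma pm : has_perfect_matching e.
Proof.
exists M; split.
- move=> E; rewrite inE => /existsP[x /existsP[y /and3P[exy _ /eqP ->]]].
  by apply/existsP; exists x; apply/existsP; exists y; rewrite exy eqxx.
- apply/trivIsetP => E1 E2 h1 h2 neq; rewrite -setI_eq0; apply/eqP/setP => z.
  rewrite inE in_set0; apply/negP => /andP[z1 z2].
  have [y1 [e1 q1 E1e]] := inM h1 z1; have [y2 [e2 q2 E2e]] := inM h2 z2.
  have [y [_ _ U]] := partner z.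
  by move: neq; rewrite E1e E2e (U _ e1 q1) (U _ e2 q2) eqxx.
- apply/setP => z; rewrite inE; apply/bigcupP.
  have [y [ezy qzy _]] := partner z.
  exists [set z; y]; last by rewrite !inE eqxx.
  by rewrite inE; apply/existsP; exists z; apply/existsP; exists y; rewrite ezy qzy !eqxx.
Qed.
End NoBad.

End Tree.

Lemma final (T : finType) (e : rel T) (A s : {set T}) (u v : T) :
  symmetric e -> independent e A -> independent e (~: A) -> #|A| = #|~: A| ->
  e u v -> u \in A -> u \in s -> v \notin s ->
  (forall x y, e x y -> x \in s -> y \notin s -> bad u v x y) ->
  #|A :&: s| < #|~: A :&: s| ->
  exists X : {set T},
    [/\ #|~: X| < #|X|, induced_edges e X = set0 & #|induced_edges e (~: X)| = 1].
Proof.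
move=> esym indA indB cAB euv uA us vs cross lt.
have vA : v \notin A by apply: contraT => /negbNE vA; have := indA _ _ uA vA; rewrite euv.
have nAA : forall x y, e x y -> x \in A -> y \in A -> False.
  by move=> x y exy xA yA; have := indA _ _ xA yA; rewrite exy.
have nBB : forall x y, e x y -> x \notin A -> y \notin A -> False.
  by move=> x y exy xA yA; have := indB x y; rewrite !in_setC exy => /(_ xA yA).
set X := (A :&: ~: s) :|: (~: A :&: s).
have inX z : (z \in X) = ((z \in A) && (z \notin s)) || ((z \notin A) && (z \in s)).
  by rewrite !inE.
exists X; split.
- have e1 : X :&: A = A :&: ~: s by apply/setP => z; rewrite !inE; case: (z \in A); case: (z \in s).
  have e2 : X :\: A = ~: A :&: s by apply/setP => z; rewrite !inE; case: (z \in A); case: (z \in s).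
  have e3 : ~: X :&: A = A :&: s by apply/setP => z; rewrite !inE; case: (z \in A); case: (z \in s).
  have e4 : ~: X :\: A = ~: A :&: ~: s by apply/setP => z; rewrite !inE; case: (z \in A); case: (z \in s).
  have e5 : A :\: s = A :&: ~: s by apply/setP => z; rewrite !inE; case: (z \in A); case: (z \in s).
  have e6 : ~: A :\: s = ~: A :&: ~: s by apply/setP => z; rewrite !inE; case: (z \in A); case: (z \in s).
  have c1 := cardsID A X; have c2 := cardsID A (~: X).
  have c3 := cardsID s A; have c4 := cardsID s (~: A).
  rewrite e1 e2 in c1; rewrite e3 e4 in c2; rewrite e5 in c3; rewrite e6 in c4.
  lia.
- apply/setP => E; rewrite !inE; apply/negP => /andP[/existsP[x /existsP[y /andP[exy /eqP EE]]] sub].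
  subst E.
  have hx := subsetP sub x (set21 x y); have hy := subsetP sub y (set22 x y).
  move: hx hy; rewrite !inX.
  case xA: (x \in A); case yA: (y \in A); case xs: (x \in s); case ys: (y \in s) => //= _ _.
  + exact: nAA exy xA yA.
  + have := cross y x; rewrite esym exy ys xs => /(_ isT isT isT).
    rewrite /bad => /orP[] /andP[/eqP yu /eqP xv]; subst.
    * by rewrite uA in yA.
    * by rewrite us in xs.
  + have := cross x y; rewrite exy ys xs => /(_ isT isT isT).
    rewrite /bad => /orP[] /andP[/eqP xu /eqP yv]; subst.
    * by rewrite uA in xA.
    * by rewrite us in ys.
  + exact: nBB exy (negbT xA) (negbT yA).
- suff -> : induced_edges e (~: X) = [set [set u; v]] by rewrite cards1.
  apply/setP => E; rewrite !inE; apply/idP/idP.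
  + case/andP => /existsP[x /existsP[y /andP[exy /eqP ->]]] sub.
    have hx := subsetP sub x (set21 x y); have hy := subsetP sub y (set22 x y).
    move: hx hy; rewrite !in_setC !inX.
    case xA: (x \in A); case yA: (y \in A); case xs: (x \in s); case ys: (y \in s) => //= _ _.
    * by have := nAA _ _ exy xA yA.
    * have := cross x y; rewrite exy ys xs => /(_ isT isT isT).
      rewrite /bad => /orP[] /andP[/eqP xu /eqP yv]; subst => //.
      by rewrite setUC.
    * have := cross y x; rewrite esym exy ys xs => /(_ isT isT isT).
      rewrite /bad => /orP[] /andP[/eqP yu /eqP xv]; subst => //.
      by rewrite setUC.
    * by have := nBB _ _ exy (negbT xA) (negbT yA).
  + move/eqP ->; apply/andP; split.
    * by apply/existsP; exists u; apply/existsP; exists v; rewrite euv eqxx.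
    * apply/subsetP => z; rewrite !inE => /orP[] /eqP ->; rewrite ?uA ?us /= ?(negbTE vA) ?(negbTE vs) //.
Qed.

Theorem mainTheorem7 (T : finType) (e : rel T) (l : nat) :
  is_tree e -> equibipartite e -> #|T| = l.*2 ->
  ~ has_perfect_matching e ->
  exists A : {set T},
    [/\ #|~: A| < #|A|,
        induced_edges e A = set0 &
        #|induced_edges e (~: A)| = 1].
Proof.
move=> [[esym eirr] _ econn eacyc] [A [indA indB cAB]] _ npm.
case: (boolP [exists u, exists v, [&& e u v, u \in A & (d A (side e u v) < 0)%R]]).
- case/existsP => u /existsP[v /and3P[euv uA dneg]].
  apply: (final (s := side e u v) esym indA indB cAB euv uA).
  + by rewrite inE connect0.
  + apply: (side_disj esym eirr eacyc (u := v) (v := u)); [by rewrite esym | by rewrite inE connect0].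
  + move=> x y exy xs ys; exact: side_cross exy xs ys.
  + move: dneg; rewrite d_card; lia.
- move=> H; exfalso; apply: npm.
  apply: (pm esym eirr econn eacyc indA indB cAB).
  move=> u v euv uA; move: H => /existsPn /(_ u) /existsPn /(_ v).
  rewrite euv uA /= => H; lia.
Qed.
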